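(* Let $\mathcal{G}$ be an input-total system. If $\mathcal{G}\models\mathit{stratNI}$, then $\mathcal{G}\models\mathit{GNI}$, where $\mathit{stratNI}:=\forall\pi_1.\langle\langle\{\xi_N\}\rangle\rangle\pi_2.\ \square\big(\bigwedge_{a\in O}a_{\pi_1}\leftrightarrow a_{\pi_2}\big)$ and $\mathit{GNI}:=\forall\pi_1.\forall\pi_2.\exists\pi_3.\ \square\big(\bigwedge_{a\in H}a_{\pi_1}\leftrightarrow a_{\pi_3}\big)\wedge\square\big(\bigwedge_{a\in O}a_{\pi_2}\leftrightarrow a_{\pi_3}\big)$.
   Context: A multi-stage concurrent game structure (MSCGS) is $\mathcal{G}=(S,s_0,\Xi,\mathscr{M},\delta,d,\mathbf{AP},\ell)$: finite states $S$, initial state $s_0$, finite agents $\Xi$, finite moves $\mathscr{M}$, transition function $\delta:S\times(\Xi\to\mathscr{M})\to S$, stage function $d:\Xi\to\mathbb{N}$, atomic propositions $\mathbf{AP}$, labelling $\ell:S\to2^{\mathbf{AP}}$. A system here is an MSCGS with agents $\xi_N$ (resolving non-determinism), $\xi_H$ (choosing high-security inputs) and $\xi_L$ (choosing low-security inputs), where $\mathbf{AP}$ contains pairwise disjoint sets $H$ (high inputs), $L$ (low inputs) and $O$ (outputs), and the move of $\xi_H$ (resp. $\xi_L$) determines the values of the propositions in $H$ (resp. $L$) in the next state. The system is input-total if in each state $\xi_H$ and $\xi_L$ can choose every possible valuation of their input propositions. Semantics of $\texttt{HyperATL}^*$ used here: a strategy for agent $\xi$ is $f_\xi:S^+\times(\{\xi'\mid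 d(\xi')<d(\xi)\}\to\mathscr{M})\to\mathscr{M}$; for $A\subseteq\Xi$, strategies $F_A$ and state $s$, $\mathit{out}(\mathcal{G},s,F_A)$ is the set of $u\in S^\omega$ with $u(0)=s$ such that for all $i$ there is a global move vector $\sigma$ with $\delta(u(i),\sigma)=u(i+1)$ and $\sigma(\xi)=f_\xi(u[0,i],\sigma_{\mid\{\xi'\mid d(\xi')<d(\xi)\}})$ for all $\xi\in A$. For a path assignment $\Pi$, $\Pi\models\langle\langle A\rangle\rangle\pi.\varphi$ iff there exist $F_A$ such that for all $t\in\mathit{out}(\mathcal{G},\Pi(\epsilon)(0),F_A)$, $\Pi[\pi\mapsto t]\models\varphi$, where $\Pi(\epsilon)$ is the most recently added path ($\Pi(\epsilon)(0)=s_0$ if $\Pi$ is empty); $\forall\pi=\langle\langle\emptyset\rangle\rangle\pi$, $\exists\pi=\langle\langle\Xi\rangle\rangle\pi$; $a_\pi$ holds iff $a\in\ell$ of the current state of the path bound to $\pi$; temporal operators are interpreted synchronously on all paths. $\mathcal{G}\models\varphi$ iff the empty assignment satisfies $\varphi$. *)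

(* Defs.v *)
From mathcomp Require Import all_boot.
Set Implicit Arguments. Unset Strict Implicit. Unset Printing Implicit Defensive.

(* The three agents of a system: xiN (non-determinism), xiH (high inputs),
   xiL (low inputs).  Xi = {xiN, xiH, xiL}. *)
Inductive Agent := xiN | xiH | xiL.

Record system (S M AP : finType) := System {
  s0    : S;
  delta : S -> (Agent -> M) -> S;
  stage : Agent -> nat;
  ell   : S -> AP -> bool;
  Hi    : {set AP};
  Lo    : {set AP};
  Out   : {set AP}
}.

Section Sem.
Variables (S M AP : finType) (G : system S M AP).

Definition is_system : Prop :=
  [/\ [disjoint Hi G & Lo G], [disjoint Hi G & Out G], [disjoint Lo G & Out G],
   (forall s (sg sg' : Agent -> M), sg xiH = sg' xiH ->
      forall a, a \in Hi G -> ell G (delta G s sg) a = ell G (delta G s sg') a) &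
   (forall s (sg sg' : Agent -> M), sg xiL = sg' xiL ->
      forall a, a \in Lo G -> ell G (delta G s sg) a = ell G (delta G s sg') a)].

Definition input_total : Prop :=
  is_system /\
  (forall s (v : AP -> bool), exists m : M, forall sg : Agent -> M,
      sg xiH = m -> forall a, a \in Hi G -> ell G (delta G s sg) a = v a) /\
  (forall s (v : AP -> bool), exists m : M, forall sg : Agent -> M,
      sg xiL = m -> forall a, a \in Lo G -> ell G (delta G s sg) a = v a).

(* strategy of agent xi: S^+ x ({xi' | d xi' < d xi} -> M) -> M.
   Finite nonempty histories are represented as sequences (only nonempty
   ones are ever consulted). *)
Definition strategy (xi : Agent) :=
  seq S -> ({x : Agent | stage G x < stage G xi} -> M) -> M.

Definition restrict (xi : Agent) (sg : Agent -> M) :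
  {x : Agent | stage G x < stage G xi} -> M := fun x => sg (sval x).

Definition prefix (u : nat -> S) (i : nat) : seq S := [seq u k | k <- iota 0 i.+1].

Definition out (A : pred Agent) (F : forall xi, A xi -> strategy xi)
    (s : S) (u : nat -> S) : Prop :=
  u 0 = s /\
  forall i, exists sg : Agent -> M,
    delta G (u i) sg = u i.+1 /\
    forall xi (h : A xi), sg xi = F xi h (prefix u i) (@restrict xi sg).

(* semantics of <<A>> pi. phi, where s is the first state of the most
   recently quantified path and phi is the semantics of the body, as a
   predicate of the newly bound path *)
Definition strat_quant (A : pred Agent) (s : S) (phi : (nat -> S) -> Prop) : Prop :=
  exists F : (forall xi, A xi -> strategy xi), forall t, out F s t -> phi t.

(* forall pi = <<{}>> pi ,  exists pi = <<Xi>> pi *)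
Definition forall_path := strat_quant pred0.
Definition exists_path := strat_quant predT.

Definition glob_agree (P : {set AP}) (p1 p2 : nat -> S) : Prop :=
  forall i, forall a, a \in P -> ell G (p1 i) a = ell G (p2 i) a.

Definition models_stratNI : Prop :=
  forall_path (s0 G) (fun p1 =>
    strat_quant (fun x => if x is xiN then true else false) (p1 0) (fun p2 => glob_agree (Out G) p1 p2)).

Definition models_GNI : Prop :=
  forall_path (s0 G) (fun p1 =>
    forall_path (p1 0) (fun p2 =>
      exists_path (p2 0) (fun p3 =>
        glob_agree (Hi G) p1 p3 /\ glob_agree (Out G) p2 p3))).
End Sem.

(* Main.v *)
Require Import Defs.
From mathcomp Require Import all_boot.
From Stdlib Require Import ClassicalEpsilon.

Lemma prefix_last (S : finType) (u : nat -> S) i x : last x (Defs.prefix u i) = u i.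
Proof. by rewrite /Defs.prefix -addn1 iotaD map_cat last_cat /= add0n. Qed.

Lemma prefix_size (S : finType) (u : nat -> S) i : size (Defs.prefix u i) = i.+1.
Proof. by rewrite /Defs.prefix size_map size_iota. Qed.

Theorem lemma4p1 (S M AP : finType) (G : system S M AP) :
  input_total G -> models_stratNI G -> models_GNI G.
Proof.
move=> [_ [Hin _]] [F0 HNI].
pose fm s v := proj1_sig (constructive_indefinite_description _ (Hin s v)).
have Hfm : forall s v (sg : Agent -> M), sg xiH = fm s v ->
    forall a, a \in Hi G -> ell G (delta G s sg) a = v a.
  by move=> s v; exact: (proj2_sig (constructive_indefinite_description _ (Hin s v))).
exists (fun xi (h : pred0 xi) => False_rect (strategy G xi) (notF h)).
move=> p1 [p10 Hp1].
exists (fun xi (h : pred0 xi) => False_rect (strategy G xi) (notF h)).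
move=> p2 [p20 Hp2].
have Hp2' : out F0 (s0 G) p2.
  split; first by rewrite p20 p10.
  by move=> i; have [sg [Hd _]] := Hp2 i; exists sg; split => // -[].
have [FN HFN] := HNI p2 Hp2'.
rewrite p20 p10 in HFN.
pose fH : strategy G xiH := fun h _ => fm (last (s0 G) h) (ell G (p1 (size h))).
pose fL : strategy G xiL := fun _ _ => fm (s0 G) (fun _ => true).
pose F := fun xi (_ : predT xi) =>
  match xi return strategy G xi with
  | xiN => FN xiN erefl | xiH => fH | xiL => fL end.
exists F => t [t0 Ht].
split.
- move=> [|i] a Ha; first by rewrite t0 p20 p10.
  have [sg [Hd Hsg]] := Ht i.
  rewrite -Hd (Hfm (t i) (ell G (p1 i.+1)) sg) //.
  by rewrite (Hsg xiH isT) /= /fH prefix_last prefix_size.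
- apply: HFN; split; first by rewrite t0 p20.
  move=> i; have [sg [Hd Hsg]] := Ht i.
  exists sg; split => // -[] h //.
  rewrite (Hsg xiN isT) /=.
  by rewrite (eq_irrelevance h erefl).
Qed.
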